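(* Let $A$ be a commutative ring and let $(x_0,\ldots,x_n)$ be a path in $Y(A)$. Let $X\in\mathrm{SL}_2(A)$ with $\infty\cdot X=x_0$ and let $Y\in\mathrm{SL}_2(A)$ be such that $Z:=XY^{-1}\in B$, say $Z=\begin{pmatrix}u&0\\c&u^{-1}\end{pmatrix}$. Let $a_1,\ldots,a_n\in A$ be the elements with $x_i=\infty\cdot E(a_i)\cdots E(a_1)X$ for $1\le i\le n$, and let $b_1,\ldots,b_n\in A$ be the elements with $x_i=\infty\cdot E(b_i)\cdots E(b_1)Y$ for $1\le i\le n$. Then $b_1=u^2a_1+cu$ and $b_i=u^{2(-1)^{i-1}}a_i$ for all $i\ge2$.
   Context: A unimodular row over $A$ is $(a,b)\in A^2$ with $aA+bA=A$. $\Gamma(A)$ is the graph whose vertices are classes of unimodular rows modulo multiplication by units, with $\{[u],[v]\}$ an edge iff the matrix with rows $u,v$ lies in $\mathrm{GL}_2(A)$; $Y(A)$ is its clique complex, and a path is a sequence of vertices with consecutive ones adjacent. $\mathrm{SL}_2(A)$ acts on vertices on the right by $[u]\cdot M=[uM]$; $\infty=[(1,0)]$. $E(a)=\begin{pmatrix}a&1\\-1&0\end{pmatrix}$. $B$ is the group of lower triangular matrices in $\mathrm{SL}_2(A)$. (For a path and a matrix $X$ with $\infty\cdot X=x_0$, the elements $a_i$ with $x_i=\infty\cdot E(a_i)\cdots E(a_1)X$ exist and are unique.) *)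

(* Defs.v *)
From HB Require Import structures.
From mathcomp Require Import all_boot all_order all_algebra.
Set Implicit Arguments. Unset Strict Implicit. Unset Printing Implicit Defensive.
Import Order.TTheory GRing.Theory Num.Theory.
Local Open Scope ring_scope.

Section Defs.
Variable A : comUnitRingType.

Definition mx2 (p q r s : A) : 'M[A]_2 :=
  \matrix_(i < 2, j < 2)
    if i == 0 then (if j == 0 then p else q) else (if j == 0 then r else s).

Definition rv2 (a b : A) : 'rV[A]_2 := \row_(j < 2) if j == 0 then a else b.

Definition rows2 (u v : 'rV[A]_2) : 'M[A]_2 :=
  \matrix_(i < 2, j < 2) if i == 0 then u 0 j else v 0 j.

Definition unimodular (v : 'rV[A]_2) : Prop :=
  exists s t : A, v 0 0 * s + v 0 1 * t = 1.

(* [u] = [v] as vertices: equal modulo multiplication by a unit *)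
Definition same_vertex (u v : 'rV[A]_2) : Prop :=
  exists2 l : A, l \is a GRing.unit & v = l *: u.

(* edge of Gamma(A): the matrix with rows u, v lies in GL_2(A) *)
Definition adjacent (u v : 'rV[A]_2) : Prop := rows2 u v \in unitmx.

(* (x_0, ..., x_n) is a path in Y(A) (vertices given by representatives) *)
Definition is_path (n : nat) (x : nat -> 'rV[A]_2) : Prop :=
  (forall i, (i <= n)%N -> unimodular (x i)) /\
  (forall i, (i < n)%N -> adjacent (x i) (x i.+1)).

Definition inSL2 (M : 'M[A]_2) : Prop := \det M = 1.

Definition inB (M : 'M[A]_2) : Prop := M 0 1 = 0 /\ inSL2 M.

Definition infty : 'rV[A]_2 := rv2 1 0.

Definition act (u : 'rV[A]_2) (M : 'M[A]_2) : 'rV[A]_2 := u *m M.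

Definition Emx (a : A) : 'M[A]_2 := mx2 a 1 (-1) 0.

Fixpoint Eprod (a : nat -> A) (i : nat) : 'M[A]_2 :=
  match i with
  | O => 1%:M
  | S k => Emx (a k.+1) *m Eprod a k
  end.

End Defs.

(* Main.v *)
Require Import Defs.
From HB Require Import structures.
From mathcomp Require Import all_boot all_order all_algebra.
From mathcomp Require Import ring.
Import Order.TTheory GRing.Theory Num.Theory.
Local Open Scope ring_scope.
Section S.
Variable A : comUnitRingType.
Lemma mx2E (p q r s : A) i j : mx2 p q r s i j =
  if i == 0 then (if j == 0 then p else q) else (if j == 0 then r else s).
Proof. by rewrite /mx2 mxE. Qed.
Lemma mx2_mul (p q r s p' q' r' s' : A) : mx2 p q r s *m mx2 p' q' r' s' =
  mx2 (p * p' + q * r') (p * q' + q * s') (r * p' + s * r') (r * q' + s * s').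
Proof.
apply/matrixP => i j; rewrite !mxE !big_ord_recl big_ord0 !mxE addr0.
by case: i => [[|[|//]] ?]; case: j => [[|[|//]] ?]; rewrite /= ?mxE /=.
Qed.
Lemma mx2_eta (M : 'M[A]_2) : M = mx2 (M 0 0) (M 0 1) (M 1 0) (M 1 1).
Proof.
apply/matrixP => i j; rewrite !mxE.
by case: i => [[|[|//]] ?]; case: j => [[|[|//]] ?]; rewrite /=; congr (M _ _); apply/val_inj.
Qed.
Lemma det_mx2 (p q r s : A) : \det (mx2 p q r s) = p * s - q * r.
Proof.
rewrite (expand_det_row _ 0) !big_ord_recl big_ord0 /cofactor !det_mx11 !mxE /=.
rewrite !expr0 !mul1r expr1 addr0. ring.
Qed.
Lemma rv2_mul (al be p q r s : A) : rv2 al be *m mx2 p q r s = rv2 (al * p + be * r) (al * q + be * s).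
Proof.
apply/matrixP => i j; rewrite !mxE !big_ord_recl big_ord0 !mxE addr0.
by case: j => [[|[|//]] ?]; rewrite /= ?mxE /=.
Qed.
Lemma rv2Z (l al be : A) : l *: rv2 al be = rv2 (l * al) (l * be).
Proof. by apply/matrixP => i j; rewrite !mxE; case: (j == 0). Qed.
Lemma rv2_inj (al be al' be' : A) : rv2 al be = rv2 al' be' -> al = al' /\ be = be'.
Proof. move=> /matrixP H; have := H 0 0; have := H 0 1; rewrite !mxE /=. by move=> -> ->. Qed.
Lemma uniq_b (b1 b2 k l : A) (Q : 'M[A]_2) : \det Q = 1 -> l \is a GRing.unit ->
  k *: (rv2 1 0 *m (Emx b1 *m Q)) = l *: (rv2 1 0 *m (Emx b2 *m Q)) -> b1 = b2.
Proof.
move=> dQ lU; rewrite [Q]mx2_eta /Emx !mx2_mul !rv2_mul !rv2Z => /rv2_inj [e1 e2].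
move: dQ; rewrite [Q]mx2_eta det_mx2 /=.
move: e1 e2; set q1 := Q 0 0; set q2 := Q 0 1; set q3 := Q 1 0; set q4 := Q 1 1.
move=> e1 e2 dQ.
move/eqP: e1; rewrite -subr_eq0 => /eqP e1.
move/eqP: e2; rewrite -subr_eq0 => /eqP e2.
have hk : k - l = 0.
  rewrite -[k - l]mulr1 -dQ.
  have -> : (k - l) * (q1 * q4 - q2 * q3) =
    q1 * (k * (1 * (b1 * q2 + 1 * q4) + 0 * (-1 * q2 + 0 * q4)) -
    l * (1 * (b2 * q2 + 1 * q4) + 0 * (-1 * q2 + 0 * q4))) -
    q2 * (k * (1 * (b1 * q1 + 1 * q3) + 0 * (-1 * q1 + 0 * q3)) -
    l * (1 * (b2 * q1 + 1 * q3) + 0 * (-1 * q1 + 0 * q3))) by ring.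
  by rewrite e1 e2 !mulr0 subrr.
have hb : k * b1 - l * b2 = 0.
  rewrite -[_ - _]mulr1 -dQ.
  have -> : (k * b1 - l * b2) * (q1 * q4 - q2 * q3) =
    q4 * (k * (1 * (b1 * q1 + 1 * q3) + 0 * (-1 * q1 + 0 * q3)) -
    l * (1 * (b2 * q1 + 1 * q3) + 0 * (-1 * q1 + 0 * q3))) -
    q3 * (k * (1 * (b1 * q2 + 1 * q4) + 0 * (-1 * q2 + 0 * q4)) -
    l * (1 * (b2 * q2 + 1 * q4) + 0 * (-1 * q2 + 0 * q4))) by ring.
  by rewrite e1 e2 !mulr0 subrr.
move/eqP: hk; rewrite subr_eq0 => /eqP hk; subst k.
move: hb; rewrite -mulrBr => hb.
apply/eqP; rewrite -subr_eq0; apply/eqP.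
by rewrite -(mulKr lU (b1 - b2)) hb mulr0.
Qed.
Lemma keyE (d e al : A) : d \is a GRing.unit ->
  Emx al *m mx2 d 0 e d^-1 = mx2 d^-1 0 0 d *m Emx (d ^+ 2 * al + d * e).
Proof.
move=> dU; rewrite /Emx !mx2_mul.
rewrite (_ : d ^+ 2 * al + d * e = d * (d * al + e)); last by ring.
rewrite mulKr //; congr mx2; ring.
Qed.
Lemma step (d e al be : A) (Q : 'M[A]_2) (x : 'rV[A]_2) : d \is a GRing.unit -> \det Q = 1 ->
  same_vertex (act (infty A) (Emx al *m (mx2 d 0 e d^-1 *m Q))) x ->
  same_vertex (act (infty A) (Emx be *m Q)) x ->
  be = d ^+ 2 * al + d * e /\
  Emx al *m (mx2 d 0 e d^-1 *m Q) = mx2 d^-1 0 0 d *m (Emx be *m Q).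
Proof.
move=> dU dQ [l1 U1 H1] [l2 U2 H2].
have hK : Emx al *m (mx2 d 0 e d^-1 *m Q) =
   mx2 d^-1 0 0 d *m (Emx (d ^+ 2 * al + d * e) *m Q) by rewrite mulmxA keyE // mulmxA.
suff hb : d ^+ 2 * al + d * e = be by split; [rewrite hb | rewrite hK hb].
apply: (uniq_b _ _ (l1 * d^-1) l2 Q dQ U2).
move: H1; rewrite H2 /act /infty => ->.
rewrite hK mulmxA rv2_mul -scalerA.
congr (_ *: _); rewrite !mulmxA /Emx !rv2_mul scalemxAl rv2Z; congr (rv2 _ _ *m _); ring.
Qed.
Lemma det_Emx (al : A) : \det (Emx al) = 1.
Proof. by rewrite /Emx det_mx2; ring. Qed.
Lemma det_Eprod (b : nat -> A) (Y : 'M[A]_2) i : \det Y = 1 -> \det (Eprod b i *m Y) = 1.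
Proof.
move=> dY; elim: i => [|i IH] /=; first by rewrite mul1mx.
by rewrite -mulmxA det_mulmx det_Emx IH mul1r.
Qed.
End S.

Theorem proposition5p1 (A : comUnitRingType) (n : nat) (x : nat -> 'rV[A]_2)
  (X Y : 'M[A]_2) (u c : A) (a b : nat -> A) :
  is_path n x ->
  inSL2 X -> same_vertex (act (infty A) X) (x 0%N) ->
  inSL2 Y ->
  inB (X *m invmx Y) ->
  X *m invmx Y = mx2 u 0 c u^-1 ->
  (forall i, (1 <= i <= n)%N -> same_vertex (act (infty A) (Eprod a i *m X)) (x i)) ->
  (forall i, (1 <= i <= n)%N -> same_vertex (act (infty A) (Eprod b i *m Y)) (x i)) ->
  (1 <= n)%N ->
  b 1%N = u ^+ 2 * a 1%N + c * u /\
  (forall i, (2 <= i <= n)%N -> b i = u ^ (2%:Z * (-1) ^+ i.-1) * a i).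
Proof.
move=> _ _ _ dY [_ dZ] hZ Ha Hb n1.
have YU : Y \in unitmx by rewrite unitmxE dY unitr1.
have hX : X = mx2 u 0 c u^-1 *m Y by rewrite -hZ mulmxKV.
have uU : u \is a GRing.unit.
  apply/unitrPr; exists u^-1; move: dZ; rewrite /inSL2 hZ det_mx2 => <-; ring.
pose d i := if odd i then u^-1 else u.
pose P i := Eprod a i *m X = mx2 (d i) 0 0 (d i)^-1 *m (Eprod b i *m Y).
have dU : forall i, d i \is a GRing.unit by move=> i; rewrite /d; case: odd; rewrite ?unitrV.
have S1 : b 1%N = u ^+ 2 * a 1%N + u * c /\ P 1%N.
  have h1 := Ha 1%N; have h2 := Hb 1%N.
  rewrite /= !mulmx1 in h1 h2.
  rewrite hX in h1.
  have [hb hm] := step _ _ _ _ _ _ _ uU dY (h1 n1) (h2 n1).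
  split => //; rewrite /P /= !mulmx1 hX hm /d /= invrK //.
have Sn : forall i, (1 <= i)%N -> (i < n)%N -> P i ->
    b i.+1 = (d i) ^+ 2 * a i.+1 + d i * 0 /\ P i.+1.
  move=> i i1 iin Pi.
  have h1 := Ha i.+1; have h2 := Hb i.+1.
  rewrite /= -!mulmxA Pi in h1; rewrite /= -!mulmxA in h2.
  have hi : (1 <= i.+1 <= n)%N by rewrite iin.
  have [hb hm] := step _ _ _ _ _ _ _ (dU i) (det_Eprod _ b Y i dY) (h1 hi) (h2 hi).
  split => //; rewrite /P /= -!mulmxA Pi hm /d /=.
  by case: (odd i) => /=; rewrite ?invrK.
have AllP : forall i, (1 <= i <= n)%N -> P i.
  elim => [//|[|i] IH /andP [_ hi]]; first by case: S1.
  by case: (Sn i.+1 erefl hi (IH _)) => //; rewrite /= ltnW.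
split; first by case: S1 => -> _; rewrite (mulrC u c).
case => [//|[//|i]] /andP [_ hi] /=.
have hi2 : (1 <= i.+1 <= n)%N by rewrite /= ltnW.
have [-> _] := Sn i.+1 erefl hi (AllP _ hi2).
rewrite mulr0 addr0 -signr_odd /d /=.
by case: (odd i) => /=; rewrite ?expr0 ?mulr1 ?expr1 ?mulrN1 ?exprVn.
Qed.
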